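(* Let $R$ be a semiring, let $\mathcal{I}(R)$ be the set of ideals of $R$, $\mathcal{KI}(R)$ the set of $k$-ideals of $R$, and $\mathcal{KC}(R)$ the set of $k$-congruences on $R$, and let $\kappa:\mathcal{I}(R)\to\{\text{congruences on }R\}$ be $\kappa(A)=\kappa_A$. (1) The restriction of $\kappa$ to $\mathcal{KI}(R)$ is an inclusion-preserving bijection from $\mathcal{KI}(R)$ onto $\mathcal{KC}(R)$. (2) If $\mathcal{F}$ is a family with $\mathcal{KI}(R)\subseteq\mathcal{F}\subseteq\mathcal{I}(R)$ and $\kappa$ is injective on $\mathcal{F}$, then $\mathcal{F}=\mathcal{KI}(R)$.
   Context: A semiring $(R,+,\cdot)$ is a set with two binary operations such that $(R,+)$ is a commutative semigroup, $(R,\cdot)$ is a semigroup, and multiplication distributes over addition from both sides; no additive neutral element or identity is assumed. An ideal of $R$ is a nonempty subset $A\subseteq R$ with $a+b\in A$ and $ra,ar\in A$ for all $a,b\in A$, $r\in R$. For an ideal $A$, its $k$-closure is $\overline{A}=\{x\in R\mid x+a=b \text{ for some } a,b\in A\}$, and $A$ is a $k$-ideal if $A=\overline{A}$. A congruence on $R$ is an equivalence relation $\equiv$ such that $a\equiv b$ implies $a+c\equiv b+c$, $ac\equiv bc$, $ca\equiv cb$ for all $a,b,c\in R$. For an ideal $A$, $\kappa_A$ is the congruence defined by $x\,\kappa_A\,y$ iff $x+a=y+b$ for some $a,b\in A$. A congruence $\theta$ is a $k$-congruence if $\theta=\kappa_A$ for some ideal $A$ of $R$. Congruences are compared as subsets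 of $R\times R$. Throughout, $|R|\geq 2$. *)

(* Defs.v *)
(* a semiring in the paper's sense (no 0, no 1 assumed). *)

Record semiring := Semiring {
  carrier :> Type;
  sadd : carrier -> carrier -> carrier;
  smul : carrier -> carrier -> carrier;
  sadd_assoc : forall a b c, sadd a (sadd b c) = sadd (sadd a b) c;
  sadd_comm : forall a b, sadd a b = sadd b a;
  smul_assoc : forall a b c, smul a (smul b c) = smul (smul a b) c;
  smul_addl : forall a b c, smul (sadd a b) c = sadd (smul a c) (smul b c);
  smul_addr : forall a b c, smul a (sadd b c) = sadd (smul a b) (smul a c)
}.

Arguments sadd {s}.
Arguments smul {s}.

Section Defs.
Variable R : semiring.

Definition subset (A B : R -> Prop) : Prop := forall x, A x -> B x.
Definition rel_subset (t u : R -> R -> Prop) : Prop :=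
  forall x y, t x y -> u x y.

Definition is_ideal (A : R -> Prop) : Prop :=
  (exists a, A a) /\
  (forall a b, A a -> A b -> A (sadd a b)) /\
  (forall r a, A a -> A (smul r a) /\ A (smul a r)).

Definition kclosure (A : R -> Prop) : R -> Prop :=
  fun x => exists a b, A a /\ A b /\ sadd x a = b.

Definition is_kideal (A : R -> Prop) : Prop := is_ideal A /\ A = kclosure A.

Definition is_congruence (t : R -> R -> Prop) : Prop :=
  (forall x, t x x) /\ (forall x y, t x y -> t y x) /\
  (forall x y z, t x y -> t y z -> t x z) /\
  (forall a b c, t a b ->
     t (sadd a c) (sadd b c) /\ t (smul a c) (smul b c) /\ t (smul c a) (smul c b)).

Definition kappa (A : R -> Prop) : R -> R -> Prop :=
  fun x y => exists a b, A a /\ A b /\ sadd x a = sadd y b.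

Definition is_kcongruence (t : R -> R -> Prop) : Prop :=
  exists A, is_ideal A /\ t = kappa A.

End Defs.

(* Main.v *)
Require Import Defs.
From Stdlib Require Import FunctionalExtensionality PropExtensionality.

Section S.
Variable R : semiring.

Lemma swap3 (p c e : R) : sadd (sadd p c) e = sadd (sadd p e) c.
Proof. rewrite <- !sadd_assoc. rewrite (sadd_comm _ c e). reflexivity. Qed.

Lemma kclosure_ideal (A : R -> Prop) : is_ideal R A -> is_ideal R (kclosure R A).
Proof.
  intros [[a0 Ha0] [Hadd Hmul]]. split; [|split].
  - exists a0. exists a0, (sadd a0 a0). split; [exact Ha0|]. split; [apply Hadd; auto|reflexivity].
  - intros x y [a [b [Ha [Hb E]]]] [c [d [Hc [Hd F]]]].
    exists (sadd a c), (sadd b d). split; [apply Hadd; auto|]. split; [apply Hadd; auto|].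
    rewrite <- E, <- F. rewrite !sadd_assoc. f_equal.
    apply swap3.
  - intros r x [a [b [Ha [Hb E]]]]. split.
    + exists (smul r a), (smul r b). split; [exact (proj1 (Hmul r a Ha))|]. split; [exact (proj1 (Hmul r b Hb))|].
      rewrite <- E, smul_addr. reflexivity.
    + exists (smul a r), (smul b r). split; [exact (proj2 (Hmul r a Ha))|]. split; [exact (proj2 (Hmul r b Hb))|].
      rewrite <- E, smul_addl. reflexivity.
Qed.

Lemma sub_kclosure (A : R -> Prop) : is_ideal R A -> forall x, A x -> kclosure R A x.
Proof.
  intros [_ [Hadd _]] x Hx. exists x, (sadd x x). repeat split; auto.
Qed.

Lemma kclosure_closed (A : R -> Prop) : is_ideal R A ->
  forall x, kclosure R (kclosure R A) x -> kclosure R A x.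
Proof.
  intros HA x [a' [b' [[a [c [Ha [Hc E1]]]] [[b [d [Hb [Hd E2]]]] E]]]].
  destruct HA as [_ [Hadd _]].
  exists (sadd c b), (sadd d a). repeat split; try apply Hadd; auto.
  rewrite <- E1, <- E2, <- E. rewrite !sadd_assoc. rewrite swap3. reflexivity.
Qed.

Lemma kclosure_kideal (A : R -> Prop) : is_ideal R A -> is_kideal R (kclosure R A).
Proof.
  intros HA. split; [apply kclosure_ideal; auto|].
  apply functional_extensionality; intro x; apply propositional_extensionality; split.
  - apply sub_kclosure, kclosure_ideal; auto.
  - apply kclosure_closed; auto.
Qed.

Lemma kappa_kclosure (A : R -> Prop) : is_ideal R A -> kappa R (kclosure R A) = kappa R A.
Proof.
  intros HA. apply functional_extensionality; intro x; apply functional_extensionality; intro y.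
  apply propositional_extensionality; split.
  - intros [a' [b' [[a [c [Ha [Hc E1]]]] [[b [d [Hb [Hd E2]]]] E]]]].
    destruct HA as [_ [Hadd _]].
    exists (sadd c b), (sadd d a). repeat split; try apply Hadd; auto.
    rewrite <- E1, <- E2. rewrite !sadd_assoc. rewrite E. rewrite swap3. reflexivity.
  - intros [a [b [Ha [Hb E]]]]. exists a, b. repeat split; try apply sub_kclosure; auto.
Qed.

Lemma kappa_inj (A B : R -> Prop) : is_kideal R A -> is_kideal R B ->
  kappa R A = kappa R B -> forall x, A x -> B x.
Proof.
  intros [HA _] [HB EB] E x Hx.
  destruct HB as [[b Hb] [Hadd _]]. destruct HA as [_ [HaddA _]].
  assert (K : kappa R A (sadd x b) b).
  { exists x, (sadd x x). repeat split; auto. rewrite (sadd_comm _ x b), sadd_assoc. reflexivity. }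
  rewrite E in K. destruct K as [c [d [Hc [Hd F]]]].
  rewrite EB. exists (sadd b c), (sadd b d). repeat split; auto.
  rewrite sadd_assoc. exact F.
Qed.

End S.

Theorem theorem3p8 (R : semiring) (hR : exists x y : R, x <> y) :
  (* (1) kappa restricted to k-ideals: maps into KC(R), inclusion-preserving,
     injective, and onto KC(R) *)
  ((forall A, is_kideal R A -> is_kcongruence R (kappa R A)) /\
   (forall A B, is_kideal R A -> is_kideal R B ->
      subset R A B -> rel_subset R (kappa R A) (kappa R B)) /\
   (forall A B, is_kideal R A -> is_kideal R B -> kappa R A = kappa R B -> A = B) /\
   (forall t, is_kcongruence R t -> exists A, is_kideal R A /\ t = kappa R A))
  /\
  (* (2) maximality of KI(R) among families on which kappa is injective *)
  (forall F : (R -> Prop) -> Prop,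
     (forall A, is_kideal R A -> F A) ->
     (forall A, F A -> is_ideal R A) ->
     (forall A B, F A -> F B -> kappa R A = kappa R B -> A = B) ->
     forall A, F A <-> is_kideal R A).
Proof.
  split; [split; [|split; [|split]]|].
  - intros A [HA _]. exists A. split; auto.
  - intros A B _ _ S x y [a [b [Ha [Hb E]]]]. exists a, b. repeat split; auto.
  - intros A B HA HB E. apply functional_extensionality; intro x;
      apply propositional_extensionality; split.
    + apply kappa_inj; auto.
    + apply kappa_inj; auto.
  - intros t [A [HA ->]]. exists (kclosure R A). split.
    + apply kclosure_kideal; auto.
    + symmetry; apply kappa_kclosure; auto.
  - intros F H1 H2 H3 A; split; auto.
    intros HF. assert (HA := H2 A HF).
    assert (E : A = kclosure R A).
    { apply H3; auto. apply H1, kclosure_kideal; auto. symmetry; apply kappa_kclosure; auto. }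
    split; auto.
Qed.
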